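(* Let $A,B,C$ be three non-collinear points in the plane such that the angle $\angle BAC$ is not obtuse (i.e. $0<\angle BAC\le \pi/2$). Consider all rectangles $R$ having $A$ as a vertex such that one of the two sides of $R$ not containing $A$ contains $B$ and the other side of $R$ not containing $A$ contains $C$. Among these rectangles, the minimal area is attained by a rectangle one of whose sides is the segment $AB$ or the segment $AC$. *)

(* Defs.v *)
From Stdlib Require Import Reals.
Open Scope R_scope.

Definition pt := (R * R)%type.

Definition vsub (P Q : pt) : pt := (fst P - fst Q, snd P - snd Q).
Definition vadd (P Q : pt) : pt := (fst P + fst Q, snd P + snd Q).
Definition dot (u v : pt) : R := fst u * fst v + snd u * snd v.
Definition cross (u v : pt) : R := fst u * snd v - snd u * fst v.
Definition vnorm (u : pt) : R := sqrt (dot u u).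

Definition collinear (P Q S : pt) : Prop := cross (vsub Q P) (vsub S P) = 0.

Definition angle (B A C : pt) : R :=
  acos (dot (vsub B A) (vsub C A) / (vnorm (vsub B A) * vnorm (vsub C A))).

Definition on_seg (X P Q : pt) : Prop :=
  exists t : R, 0 <= t <= 1 /\
    X = (fst P + t * (fst Q - fst P), snd P + t * (snd Q - snd P)).

(* A (non-degenerate) rectangle in the plane, given by its four vertices in
   cyclic order V0 V1 V2 V3, represented by V0 and the two edge vectors
   p = V1 - V0, q = V3 - V0, which are nonzero and orthogonal. *)
Record rect := Rect { rv0 : pt; rp : pt; rq : pt }.

Definition is_rect (R0 : rect) : Prop :=
  rp R0 <> (0, 0) /\ rq R0 <> (0, 0) /\ dot (rp R0) (rq R0) = 0.

Definition V0 (R0 : rect) : pt := rv0 R0.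
Definition V1 (R0 : rect) : pt := vadd (rv0 R0) (rp R0).
Definition V2 (R0 : rect) : pt := vadd (vadd (rv0 R0) (rp R0)) (rq R0).
Definition V3 (R0 : rect) : pt := vadd (rv0 R0) (rq R0).

Definition area (R0 : rect) : R := vnorm (rp R0) * vnorm (rq R0).

Definition same_seg (X Y P Q : pt) : Prop :=
  (X = P /\ Y = Q) \/ (X = Q /\ Y = P).

Definition is_side (R0 : rect) (X Y : pt) : Prop :=
  same_seg X Y (V0 R0) (V1 R0) \/ same_seg X Y (V1 R0) (V2 R0) \/
  same_seg X Y (V2 R0) (V3 R0) \/ same_seg X Y (V3 R0) (V0 R0).

(* Admissible rectangles: A is the vertex V0 (WLOG by relabeling the cyclic
   order); the two sides not containing A are [V1,V2] and [V3,V2]; one of them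
   contains B and the other contains C. *)
Definition admissible (A B C : pt) (R0 : rect) : Prop :=
  is_rect R0 /\ V0 R0 = A /\
  ((on_seg B (V1 R0) (V2 R0) /\ on_seg C (V3 R0) (V2 R0)) \/
   (on_seg C (V1 R0) (V2 R0) /\ on_seg B (V3 R0) (V2 R0))).

(* Main.v *)
Require Import Defs.
From Stdlib Require Import Reals Lra.
Open Scope R_scope.

Lemma key (p1 p2 q1 q2 s t : R) : p1*q1+p2*q2 = 0 -> 0<=s<=1 -> 0<=t<=1 ->
  ((1 - s*t)*(p1*q2-p2*q1))^2 <= (p1*p1+p2*p2)*(q1*q1+q2*q2).
Proof.
  intros hd hs ht.
  assert (E : (p1*p1+p2*p2)*(q1*q1+q2*q2) = (p1*q2-p2*q1)^2 + (p1*q1+p2*q2)^2) by ring.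
  rewrite E, hd.
  assert (0 <= s*t <= 1) by nra.
  assert (0 <= (p1*q2-p2*q1)^2) by nra.
  replace (((1 - s*t)*(p1*q2-p2*q1))^2) with ((1-s*t)^2 * (p1*q2-p2*q1)^2) by ring.
  assert ((1-s*t)^2 <= 1) by nra. nra.
Qed.

Lemma lower (A B C : pt) R1 : admissible A B C R1 ->
  sqrt ((cross (vsub B A) (vsub C A))^2) <= area R1.
Proof.
  destruct R1 as [a [p1 p2] [q1 q2]]; destruct A as [a1 a2], B as [b1 b2], C as [c1 c2].
  unfold admissible, is_rect, area, vnorm, V0, V1, V2, V3, on_seg, cross, vsub, dot, vadd; simpl.
  intros [[_ [_ hd]] [ha H]]. subst a. simpl in H.
  rewrite <- sqrt_mult_alt by nra. apply sqrt_le_1_alt.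
  destruct H as [[[s [hs eB]] [t [ht eC]]] | [[s [hs eC]] [t [ht eB]]]];
    injection eB; injection eC; intros; subst.
  - eapply Rle_trans; [right|apply (key p1 p2 q1 q2 s t hd hs ht)]; ring.
  - eapply Rle_trans; [right|apply (key p1 p2 q1 q2 s t hd hs ht)]; ring.
Qed.


Lemma construct (A X Y : pt) :
  0 < dot (vsub X A) (vsub X A) -> cross (vsub X A) (vsub Y A) <> 0 ->
  0 <= dot (vsub X A) (vsub Y A) <= dot (vsub X A) (vsub X A) ->
  exists R0, is_rect R0 /\ V0 R0 = A /\ on_seg X (V1 R0) (V2 R0) /\
    on_seg Y (V3 R0) (V2 R0) /\ same_seg A X (V0 R0) (V1 R0) /\
    area R0 = sqrt ((cross (vsub X A) (vsub Y A))^2).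
Proof.
  destruct A as [a1 a2], X as [x1 x2], Y as [y1 y2].
  unfold dot, cross, vsub; simpl.
  set (u1 := x1 - a1). set (u2 := x2 - a2). set (v1 := y1 - a1). set (v2 := y2 - a2).
  intros hN hc hd.
  set (N := u1*u1+u2*u2).
  set (c := u1*v2-u2*v1).
  set (k := c / N).
  assert (hN0 : N <> 0) by (unfold N; lra).
  assert (hk : k <> 0) by (unfold k; unfold Rdiv; apply Rmult_integral_contrapositive_currified; [exact hc|apply Rinv_neq_0_compat; exact hN0]).
  exists (Rect (a1,a2) (u1,u2) (-k*u2, k*u1)).
  unfold is_rect, V0, V1, V2, V3, on_seg, same_seg, area, vnorm, dot, vadd; simpl.
  split; [|split; [|split; [|split; [|split]]]].
  - split; [|split].
    + intro e; injection e; intros; subst; unfold N in hN; rewrite H, H0 in hN; lra.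
    + intro e; injection e; intros.
      assert (u1 = 0) by (apply Rmult_integral in H; destruct H; [contradiction|auto]).
      assert (u2 = 0).
      { assert (-k*u2 = 0) by auto. apply Rmult_integral in H2; destruct H2; [lra|auto]. }
      unfold N in hN; rewrite H1, H2 in hN; lra.
    + ring.
  - reflexivity.
  - exists 0; split; [lra|]. f_equal; unfold u1, u2; ring.
  - exists ((u1*v1+u2*v2)/N). split.
    + split. unfold Rdiv; apply Rmult_le_pos; [lra|left; apply Rinv_0_lt_compat; unfold N; lra].
      apply (Rmult_le_reg_r N); [unfold N; lra|]. unfold Rdiv; rewrite Rmult_assoc, Rinv_l by exact hN0. unfold N; lra.
    + f_equal.
      * replace y1 with (a1 + v1) by (unfold v1; ring). unfold k, c, N. field. lra.
      * replace y2 with (a2 + v2) by (unfold v2; ring). unfold k, c, N. field. lra.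
  - left; split; auto. f_equal; unfold u1, u2; ring.
  - rewrite <- sqrt_mult_alt by lra. f_equal. unfold k, c, N. field. lra.
Qed.

Lemma acos_le (x : R) : acos x <= PI/2 -> 0 <= x.
Proof.
  intros H. destruct (Rle_lt_dec 0 x) as [h|h]; auto. exfalso.
  unfold acos in H. destruct (Rle_dec x (-1)). pose proof PI_RGT_0; lra.
  destruct (Rle_dec 1 x). lra.
  assert (0 < sqrt (1 - x²)) by (apply sqrt_lt_R0; unfold Rsqr; nra).
  assert (x / sqrt (1 - x²) < 0).
  { unfold Rdiv. apply Rmult_neg_pos; auto. apply Rinv_0_lt_compat; auto. }
  pose proof (atan_increasing _ _ H1). rewrite atan_0 in H2. lra.
Qed.

Theorem lemma1 (A B C : pt) :
  ~ collinear A B C ->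
  0 < angle B A C <= PI / 2 ->
  exists R0 : rect,
    admissible A B C R0 /\
    (is_side R0 A B \/ is_side R0 A C) /\
    (forall R1 : rect, admissible A B C R1 -> area R0 <= area R1).
Proof.
  unfold collinear, angle. intros hc [_ ha].
  apply acos_le in ha.
  assert (huu : 0 < dot (vsub B A) (vsub B A)).
  { destruct A as [a1 a2], B as [b1 b2], C as [c1 c2]; unfold dot, cross, vsub in *; simpl in *.
    destruct (Rle_lt_dec (dot (b1-a1,b2-a2) (b1-a1,b2-a2)) 0) as [h|h]; unfold dot in h; simpl in h; [|lra].
    exfalso; apply hc. pose proof (Rle_0_sqr (b1-a1)); pose proof (Rle_0_sqr (b2-a2)); unfold Rsqr in *.
    assert (Hx : b1 - a1 = 0) by (assert (E : (b1-a1)*(b1-a1) = 0) by lra; apply Rmult_integral in E; tauto).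
    assert (Hy : b2 - a2 = 0) by (assert (E : (b2-a2)*(b2-a2) = 0) by lra; apply Rmult_integral in E; tauto).
    rewrite Hx, Hy; ring. }
  assert (hvv : 0 < dot (vsub C A) (vsub C A)).
  { destruct A as [a1 a2], B as [b1 b2], C as [c1 c2]; unfold dot, cross, vsub in *; simpl in *.
    destruct (Rle_lt_dec (dot (c1-a1,c2-a2) (c1-a1,c2-a2)) 0) as [h|h]; unfold dot in h; simpl in h; [|lra].
    exfalso; apply hc. pose proof (Rle_0_sqr (c1-a1)); pose proof (Rle_0_sqr (c2-a2)); unfold Rsqr in *.
    assert (Hx : c1 - a1 = 0) by (assert (E : (c1-a1)*(c1-a1) = 0) by lra; apply Rmult_integral in E; tauto).
    assert (Hy : c2 - a2 = 0) by (assert (E : (c2-a2)*(c2-a2) = 0) by lra; apply Rmult_integral in E; tauto).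
    rewrite Hx, Hy; ring. }
  assert (hd : 0 <= dot (vsub B A) (vsub C A)).
  { unfold vnorm in ha.
    assert (0 < sqrt (dot (vsub B A) (vsub B A)) * sqrt (dot (vsub C A) (vsub C A))).
    { apply Rmult_lt_0_compat; apply sqrt_lt_R0; auto. }
    set (d := dot (vsub B A) (vsub C A)) in *.
    set (m := sqrt (dot (vsub B A) (vsub B A)) * sqrt (dot (vsub C A) (vsub C A))) in *.
    replace d with (d / m * m) by (field; lra). apply Rmult_le_pos; lra. }
  assert (hmax : dot (vsub B A) (vsub C A) <= dot (vsub B A) (vsub B A) \/
                 dot (vsub C A) (vsub B A) <= dot (vsub C A) (vsub C A)).
  { destruct A as [a1 a2], B as [b1 b2], C as [c1 c2]; unfold dot, cross, vsub in *; simpl in *.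
    set (u1 := b1 - a1) in *. set (u2 := b2 - a2) in *. set (v1 := c1 - a1) in *. set (v2 := c2 - a2) in *.
    assert (E : (u1*v1+u2*v2)^2 <= (u1*u1+u2*u2)*(v1*v1+v2*v2)).
    { assert (F : (u1*u1+u2*u2)*(v1*v1+v2*v2) = (u1*v1+u2*v2)^2 + (u1*v2-u2*v1)^2) by ring.
      rewrite F. nra. }
    destruct (Rle_lt_dec (u1*v1+u2*v2) (u1*u1+u2*u2)); [left; auto|right].
    replace (v1*u1+v2*u2) with (u1*v1+u2*v2) by ring. nra. }
  destruct hmax as [h|h].
  - destruct (construct A B C huu hc (conj hd h)) as [R0 [hr [h0 [hB [hC [hs ha0]]]]]].
    exists R0. split; [split; auto|split; [left; left; exact hs|]].
    intros R1 h1. rewrite ha0. apply lower; auto.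
  - assert (hc' : cross (vsub C A) (vsub B A) <> 0).
    { intro e; apply hc. destruct A as [a1 a2], B as [b1 b2], C as [c1 c2]; unfold cross, vsub in *; simpl in *. lra. }
    assert (hd' : 0 <= dot (vsub C A) (vsub B A)).
    { destruct A as [a1 a2], B as [b1 b2], C as [c1 c2]; unfold dot, vsub in *; simpl in *. lra. }
    destruct (construct A C B hvv hc' (conj hd' h)) as [R0 [hr [h0 [hB [hC [hs ha0]]]]]].
    exists R0. split; [split; auto|split; [right; left; exact hs|]].
    intros R1 h1. rewrite ha0.
    replace ((cross (vsub C A) (vsub B A))^2) with ((cross (vsub B A) (vsub C A))^2)
      by (unfold cross; ring).
    apply lower; auto.
Qed.
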